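(* Let $P$ be a positive opetope and $H$ a positive opetopic hypergraph. Then the functor $\mathcal H_\iota$ induces a bijection $\mathbf{pHg}_\iota(P,H)\to\mathrm{Hom}_{\widehat{\mathbf{pOpe}_\iota}}(\mathcal H_\iota(P),\mathcal H_\iota(H))$.
   Context: A positive hypergraph $S$ consists of finite sets $S_k$ ($k\in\mathbb{N}$), only finitely many nonempty, functions $\gamma:S_{k+1}\to S_k$, and for each $k$ an assignment $\delta$ sending each $a\in S_{k+1}$ to a nonempty subset $\delta(a)\subseteq S_k$, with $\delta(a)$ a singleton for $a\in S_1$. A face is identified with its singleton; $\gamma(X)=\{\gamma(a):a\in X\}$, $\delta(X)=\bigcup_{a\in X}\delta(a)$. For $k>0$ the lower order $<^-$ on $S_k$ is the transitive closure of: $a\lhd b$ iff $\gamma(a)\in\delta(b)$. The upper order $<^+$ on $S_k$ is the transitive closure of: $a\lhd b$ iff there is $\alpha\in S_{k+1}$ with $a\in\delta(\alpha)$, $\gamma(\alpha)=b$; $a\perp^{\pm}b$ iff $a<^{\pm}b$ or $b<^{\pm}a$. A positive opetopic cardinal: $S_0\ne\emptyset$; globularity ($\gamma\gamma(a)=\gamma\delta(a)-\delta\delta(a)$, $\delta\gamma(a)=\delta\delta(a)-\gamma\delta(a)$ for $\dim a\ge2$); each $<^+$ a strict order, linear on $S_0$; for $k>0$, $\perp^-\cap\perp^+=\emptyset$ on $S_k$; for $x\in S_{k-1}$, $\{a:\gamma(a)=x\}$ and $\{a:x\in\delta(a)\}$ linearly ordered by $<^+$. A positive opetope: additionally $|P_m-\delta(P_{m+1})|\le1$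 for all $m$. $\gamma^{(k)}(p)=p$ if $\dim p\le k$, else $\gamma^{(k)}(p)=\gamma(\gamma^{(k+1)}(p))$. An $\iota$-map $h:Q\to P$ between positive hypergraphs is a function on faces with: $\dim h(q)\le\dim q$; $h(\gamma^{(k)}(q))=\gamma^{(k)}(h(q))$ for $k\ge0$, $q\in Q_{k+1}$; and, with $\ker(h)=\{q:\dim q>\dim h(q)\}$, for $q\in Q_{k+1}$: if $\dim h(q)=k+1$, $h$ restricts to a bijection $\delta(q)-\ker(h)\to\delta(h(q))$; if $\dim h(q)=k$, to a bijection $\delta(q)-\ker(h)\to\{h(q)\}$; if $\dim h(q)<k$, $\delta(q)\subseteq\ker(h)$. $\mathbf{pHg}_\iota$ is the category of positive hypergraphs and $\iota$-maps, $\mathbf{pOpe}_\iota$ its full subcategory on positive opetopes, and $\widehat{\mathbf{pOpe}_\iota}$ the category of presheaves on $\mathbf{pOpe}_\iota$. The functor $\mathcal H_\iota:\mathbf{pHg}_\iota\to\widehat{\mathbf{pOpe}_\iota}$ sends $H$ to the presheaf $P\mapsto\mathbf{pHg}_\iota(P,H)$. For a face $x$ of a positive hypergraph $H$, $H[x]$ is the least sub-hypergraph of $H$ containing $x$ (closed under $\gamma$, $\delta$); $H$ is a positive opetopic hypergraph if $H[x]$ is a positive opetope for every face $x$ of $H$. *)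

(* Defs.v *)
From Stdlib Require Import Relations.
From mathcomp Require Import all_boot.
Set Implicit Arguments. Unset Strict Implicit. Unset Printing Implicit Defensive.

(* A positive hypergraph: a finite type of faces, each with a dimension;
   gam = target gamma, del = source delta (both meaningful only for faces of
   positive dimension; their values on 0-dimensional faces are ignored). *)
Record phg := PHg {
  face : finType;
  dim : face -> nat;
  gam : face -> face;
  del : face -> {set face}
}.

Section Hypergraph.
Variable H : phg.
Local Notation F := (face H).

Definition is_phg : Prop :=
  forall a : F, 0 < dim a ->
    [/\ dim (gam a) = (dim a).-1,
        del a != set0,
        {in del a, forall b, dim b = (dim a).-1} &
        (dim a = 1 -> exists b, del a = [set b])].

Definition gamS (X : {set F}) : {set F} := [set gam a | a in X].
Definition delS (X : {set F}) : {set F} := \bigcup_(a in X) del a.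

Definition lower_step (a b : F) : Prop :=
  [/\ 0 < dim a, dim a = dim b & gam a \in del b].
Definition upper_step (a b : F) : Prop :=
  dim a = dim b /\
  exists al : F, [/\ dim al = (dim a).+1, a \in del al & gam al = b].

Definition lower_lt : relation F := clos_trans F lower_step.
Definition upper_lt : relation F := clos_trans F upper_step.
Definition lower_perp (a b : F) : Prop := lower_lt a b \/ lower_lt b a.
Definition upper_perp (a b : F) : Prop := upper_lt a b \/ upper_lt b a.

Definition is_pocardinal : Prop :=
  is_phg /\ (exists a : F, dim a = 0) /\
  [/\
      (forall a : F, 2 <= dim a ->
         [set gam (gam a)] = gamS (del a) :\: delS (del a) /\
         del (gam a) = delS (del a) :\: gamS (del a)),
      (forall a : F, ~ upper_lt a a),
      (forall a b : F, dim a = 0 -> dim b = 0 -> a <> b -> upper_perp a b) &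
      (forall a b : F, 0 < dim a -> dim a = dim b ->
         ~ (lower_perp a b /\ upper_perp a b))] /\
  [/\
      (forall x a b : F, 0 < dim a -> 0 < dim b -> gam a = x -> gam b = x ->
         a <> b -> upper_perp a b) &
      (forall x a b : F, 0 < dim a -> 0 < dim b -> x \in del a -> x \in del b ->
         a <> b -> upper_perp a b)].

Definition is_popetope : Prop :=
  is_pocardinal /\
  forall m : nat,
    #|[set a : F | (dim a == m) && (a \notin delS [set b : F | dim b == m.+1])]| <= 1.

Definition gamk (k : nat) (p : F) : F := iter (dim p - k) (@gam H) p.

Definition closedb (S : {set F}) : bool :=
  [forall a in S, (0 < dim a) ==> ((gam a \in S) && (del a \subset S))].
Definition closure (x : F) : {set F} :=
  \bigcap_(S : {set F} | closedb S && (x \in S)) S.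

Definition subface (S : {set F}) : finType := {a : F | a \in S}.
Definition subhg (S : {set F}) : phg :=
  @PHg (subface S)
       (fun a => dim (val a))
       (fun a => odflt a (insub (gam (val a))))
       (fun a => [set b : subface S | val b \in del (val a)]).

End Hypergraph.

Definition face_subhg (H : phg) (x : face H) : phg := subhg (closure x).

Definition is_opetopic_hg (H : phg) : Prop :=
  is_phg H /\ forall x : face H, is_popetope (face_subhg x).

Definition bij_on (T U : finType) (h : T -> U) (A : {set T}) (B : {set U}) : Prop :=
  {in A &, injective h} /\ h @: A = B.

Definition is_iota (Q P : phg) (h : face Q -> face P) : Prop :=
  let ker := [set q : face Q | dim (h q) < dim q] in
  [/\ (forall q : face Q, dim (h q) <= dim q),
      (forall (k : nat) (q : face Q), dim q = k.+1 ->
         h (gamk k q) = gamk k (h q)) &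
      (forall (k : nat) (q : face Q), dim q = k.+1 ->
         [/\ dim (h q) = k.+1 -> bij_on h (del q :\: ker) (del (h q)),
             dim (h q) = k -> bij_on h (del q :\: ker) [set h q] &
             dim (h q) < k -> del q \subset ker])].

(* A morphism H_iota(P) -> H_iota(H) of presheaves on pOpe_iota: a family of maps
   pHg_iota(Q,P) -> pHg_iota(Q,H) indexed by positive opetopes Q, natural in Q. *)
Definition pretrans (P H : phg) : Type :=
  forall Q : phg, {ffun face Q -> face P} -> {ffun face Q -> face H}.

Definition is_nattrans (P H : phg) (al : pretrans P H) : Prop :=
  (forall (Q : phg), is_popetope Q ->
     forall f : {ffun face Q -> face P}, is_iota f -> is_iota (al Q f)) /\
  (forall (Q Q' : phg), is_popetope Q -> is_popetope Q' ->
     forall (f : {ffun face Q -> face P}) (g : {ffun face Q' -> face Q}),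
       is_iota f -> is_iota g ->
       al Q' [ffun q => f (g q)] = [ffun q => al Q f (g q)]).

Definition eq_nattrans (P H : phg) (al be : pretrans P H) : Prop :=
  forall Q : phg, is_popetope Q ->
    forall f : {ffun face Q -> face P}, is_iota f -> al Q f = be Q f.

Definition Hiota_map (P H : phg) (h : {ffun face P -> face H}) : pretrans P H :=
  fun Q f => [ffun q => h (f q)].

(* Main.v *)
Require Import Defs.
From mathcomp Require Import all_boot.
From mathcomp Require Import zify.
From Stdlib Require Import FunctionalExtensionality.
Set Implicit Arguments. Unset Strict Implicit. Unset Printing Implicit Defensive.

Lemma bij_comp (T U V : finType) (f : T -> U) (h : U -> V) (D Kf Khf : {set T})
  (Kh : {set U}) (B1 : {set U}) (B2 : {set V}) :
  (forall x, x \in D -> (x \in Khf) = (x \in Kf) || (f x \in Kh)) ->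
  bij_on f (D :\: Kf) B1 -> bij_on h (B1 :\: Kh) B2 ->
  bij_on (fun x => h (f x)) (D :\: Khf) B2.
Proof.
move=> HK [fi fim] [hi him]; split.
- move=> x y; rewrite !inE => /andP[xK xD] /andP[yK yD] e.
  rewrite HK // negb_or in xK; rewrite HK // negb_or in yK.
  case/andP: xK => xf xh; case/andP: yK => yf yh.
  have fxB : f x \in B1 by rewrite -fim; apply: imset_f; rewrite inE xf.
  have fyB : f y \in B1 by rewrite -fim; apply: imset_f; rewrite inE yf.
  apply: fi; rewrite ?inE ?xf ?yf //.
  by apply: hi; rewrite ?inE ?xh ?yh ?fxB ?fyB.
- rewrite -him; apply/setP=> z; apply/imsetP/imsetP.
  + case=> x; rewrite inE => /andP[xK xD] ->.
    rewrite HK // negb_or in xK; case/andP: xK => xf xh.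
    exists (f x) => //. by rewrite inE xh -fim imset_f // inE xf.
  + case=> y; rewrite inE => /andP[yh yB] ->.
    move: yB yh; rewrite -fim => /imsetP[x].
    rewrite inE => /andP[xf xD] -> yh.
    exists x => //. by rewrite inE xD andbT HK // negb_or xf yh.
Qed.

Lemma sub_comp (T U : finType) (f : T -> U) (D Kf Khf : {set T})
  (Kh : {set U}) (B1 : {set U}) :
  (forall x, x \in D -> (x \in Khf) = (x \in Kf) || (f x \in Kh)) ->
  bij_on f (D :\: Kf) B1 -> B1 \subset Kh -> D \subset Khf.
Proof.
move=> HK [_ fim] sB; apply/subsetP => x xD; rewrite HK //.
case xf: (x \in Kf) => //=.
by apply: (subsetP sB); rewrite -fim imset_f // inE xf xD.
Qed.

Lemma bij_set1 (T U : finType) (h : T -> U) (x : T) : bij_on h [set x] [set h x].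
Proof.
split; last by rewrite imset_set1.
by move=> a b; rewrite !inE => /eqP-> /eqP->.
Qed.

Lemma comp_iota (Q P H : phg) (f : face Q -> face P) (h : face P -> face H) :
  is_iota f -> is_iota h -> is_iota (fun q => h (f q)).
Proof.
case=> f1 f2 f3 [h1 h2 h3].
have kerE : forall q, (dim (h (f q)) < dim q) =
    (dim (f q) < dim q) || (dim (h (f q)) < dim (f q)).
  by move=> q; have := f1 q; have := h1 (f q); lia.
split.
- by move=> q; exact: leq_trans (h1 _) (f1 _).
- move=> k q dq; rewrite f2 //.
  have: dim (f q) <= k.+1 by rewrite -dq f1.
  rewrite leq_eqVlt ltnS => /orP [/eqP dfq | dfq]; first exact: h2.
  rewrite /gamk.
  have ->: dim (f q) - k = 0 by apply/eqP; rewrite subn_eq0.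
  have ->: dim (h (f q)) - k = 0.
    by apply/eqP; rewrite subn_eq0; exact: leq_trans (h1 _) dfq.
  by [].
- move=> k q dq.
  have HK : forall x, x \in del q ->
     (x \in [set q0 | dim (h (f q0)) < dim q0]) =
     (x \in [set q0 | dim (f q0) < dim q0]) || (f x \in [set p | dim (h p) < dim p]).
    by move=> x _; rewrite !inE kerE.
  case: (f3 k q dq) => F1 F2 F3.
  have: dim (f q) <= k.+1 by rewrite -dq f1.
  have hf := h1 (f q).
  rewrite leq_eqVlt ltnS leq_eqVlt => /orP [/eqP dfq | /orP [/eqP dfq | dfq]];
    split => dhfq.
  + case: (h3 k (f q) dfq) => H1 _ _. exact: bij_comp HK (F1 dfq) (H1 dhfq).
  + case: (h3 k (f q) dfq) => _ H2 _. exact: bij_comp HK (F1 dfq) (H2 dhfq).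
  + case: (h3 k (f q) dfq) => _ _ H3. exact: sub_comp HK (F1 dfq) (H3 dhfq).
  + exfalso; lia.
  + apply: bij_comp HK (F2 dfq) _.
    have ->: [set f q] :\: [set p | dim (h p) < dim p] = [set f q].
      apply/setP=> y; rewrite !inE; case: (y =P f q) => [->|] //=.
      by rewrite dhfq dfq ltnn.
      by move=> _; rewrite andbF.
    exact: bij_set1.
  + apply: sub_comp HK (F2 dfq) _.
    by rewrite sub1set inE dfq.
  + exfalso; lia.
  + exfalso; lia.
  + apply: subset_trans (F3 dfq) _.
    by apply/subsetP => x; rewrite !inE kerE => ->.
Qed.

Lemma id_iota (Q : phg) : is_iota [ffun q : face Q => q].
Proof.
have E : (fun_of_fin [ffun q : face Q => q]) = id.
  by apply: functional_extensionality => x; rewrite ffunE.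
rewrite E; split => //.
move=> k q dq; split => d.
- have ->: del q :\: [set q0 | dim (id q0) < dim q0] = del q.
    by apply/setP => y; rewrite !inE ltnn.
  split; first by move=> a b _ _.
  by rewrite imset_id.
- exfalso; lia.
- exfalso; lia.
Qed.

Theorem mainTheorem12 (P H : phg) :
  is_popetope P -> is_opetopic_hg H ->
  [/\ (* H_iota sends iota-maps P -> H to presheaf morphisms *)
      (forall h : {ffun face P -> face H}, is_iota h -> is_nattrans (Hiota_map h)),
      (* injectivity *)
      (forall h1 h2 : {ffun face P -> face H}, is_iota h1 -> is_iota h2 ->
         eq_nattrans (Hiota_map h1) (Hiota_map h2) -> h1 = h2) &
      (* surjectivity *)
      (forall al : pretrans P H, is_nattrans al ->
         exists2 h : {ffun face P -> face H}, is_iota h &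
           eq_nattrans al (Hiota_map h))].
Proof.
move=> PP HH; split.
- move=> h hi; split.
  + move=> Q _ f fi; rewrite /Hiota_map.
    have E : (fun_of_fin [ffun q => h (f q)]) = (fun q => h (f q)).
      by apply: functional_extensionality => x; rewrite ffunE.
    rewrite E; exact: comp_iota fi hi.
  + move=> Q Q' _ _ f g _ _; rewrite /Hiota_map.
    by apply/ffunP => x; rewrite !ffunE.
- move=> h1 h2 _ _ E.
  have := E P PP _ (id_iota P); rewrite /Hiota_map => e.
  apply/ffunP => x; move/ffunP: e => /(_ x); by rewrite !ffunE.
- move=> al [A1 A2]; exists (al P [ffun q => q]).
    exact: A1 PP _ (id_iota P).
  move=> Q QQ f fi.
  have := A2 P Q PP QQ [ffun q => q] f (id_iota P) fi.
  have ->: [ffun q => [ffun q0 : face P => q0] (f q)] = f.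
    by apply/ffunP => x; rewrite !ffunE.
  by move=> ->.
Qed.
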